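(* Let $h\in(0,1)$, $\rho>0$, $z\in L^2(\Gamma)$, and let $\tau,\theta>0$ satisfy $\big(\frac1\tau-\frac{c_\gamma^2}{c_1^2}\big)\frac\theta\tau>\rho^2\|\nabla\|^2$. On $X=\mathcal{V}^h_1\times(\mathcal{V}^h_0)^d$ with inner product $((f,p),(g,q)):=(f,g)_\Omega+(p,q)_\Omega$ define the linear operator $$B(f,p):=\Big(\tfrac1\tau f-\overline{u^h_a}(f)+\rho\,\mathrm{div}_h p,\ -\rho\nabla f+\tfrac\theta\tau p\Big)$$ and the map $A(f,p):=\big(u^h_a(f)-\rho\,\mathrm{div}_h p,\ -\rho\nabla f\big)$. Then $B$ is symmetric and positive definite on $X$. Moreover, if $\mu_n=(f^h_n,p^h_n)$ and $\mu_{n+1}=(f^h_{n+1},p^h_{n+1})$ are consecutive iterates of the scheme $$f^h_{n+1}=\arg\min_{f\in F^h_{ad}}\Big\{(f,u^h_a(f^h_n))_\Omega+\rho(\nabla f,p^h_n)_\Omega+\tfrac1{2\tau}\|f-f^h_n\|^2_\Omega\Big\},\quad \widetilde f^h_{n+1}=2f^h_{n+1}-f^h_n,$$ $$p^h_{n+1}=\arg\max_{p\in(\mathcal{V}^h_0)^d}\Big\{\rho(\nabla\widetilde f^h_{n+1},p)_\Omega-I_{\mathcal{B}_1}(p)-\tfrac\theta{2\tau}\|p-p^h_n\|^2_\Omega\Big\}$$ (with $f^h_n\in F^h_{ad}$, $p^h_n\in(\mathcal{V}^h_0)^d$), then $$\big(A(\mu_{n+1})+B(\mu_{n+1}-\mu_n),\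 \nu-\mu_{n+1}\big)\ge0\quad\text{for all }\nu\in F^h_{ad}\times\mathcal{B}_1.$$
   Context: Let $\Omega\subset\mathbb{R}^d$, $d\ge2$, be open bounded connected with polygonal boundary, $\Gamma\subset\partial\Omega$ relatively open. Let $\alpha\in L^\infty(\Omega)^{d\times d}$ be symmetric with $\alpha(x)\xi\cdot\xi\ge\underline\alpha|\xi|^2$ a.e. ($\underline\alpha>0$), $\beta\in L^\infty(\Omega)$, $\beta\ge0$, $\sigma\in L^\infty(\partial\Omega)$, $\sigma\ge0$, with $\beta\ge\beta_0>0$ a.e. in $\Omega$ or $\sigma\ge\sigma_0>0$ a.e. on $\partial\Omega$; $j\in H^{-1/2}(\partial\Omega)$; $a(u,v)=(\alpha\nabla u,\nabla v)_\Omega+(\beta u,v)_\Omega+(\sigma u,v)_{\partial\Omega}$ with $L^2$ inner products $(\cdot,\cdot)_\Omega,(\cdot,\cdot)_{\partial\Omega},(\cdot,\cdot)_\Gamma$. $c_1>0$ satisfies $c_1\|u\|^2_{H^1(\Omega)}\le a(u,u)$ for all $u\in H^1(\Omega)$; $c_\gamma>0$ satisfies $\|u\|_{L^2(\partial\Omega)}\le c_\gamma\|u\|_{H^1(\Omega)}$ for all $u\in H^1(\Omega)$. $\mathcal{T}^h$ is a regular triangulation of $\overline\Omega$ (boundary vertices are nodes); $\mathcal{V}^h_1$ continuous piecewise linear, $\mathcal{V}^h_0$ piecewise constant functions. For $f\in L^2(\Omega)$: $u^h(f)\in\mathcal{V}^h_1$ solves $a(u^h(f),v)=(f,v)_\Omega+\langle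 j,v\rangle$ $\forall v\in\mathcal{V}^h_1$; $u^h_a(f)\in\mathcal{V}^h_1$ solves $a(u^h_a(f),v)=(u^h(f)-z,v)_\Gamma$ $\forall v\in\mathcal{V}^h_1$; $\overline{u^h}(f)\in\mathcal{V}^h_1$ solves $a(\overline{u^h}(f),v)=(f,v)_\Omega$ $\forall v\in\mathcal{V}^h_1$; $\overline{u^h_a}(f)\in\mathcal{V}^h_1$ solves $a(\overline{u^h_a}(f),v)=(\overline{u^h}(f),v)_\Gamma$ $\forall v\in\mathcal{V}^h_1$. For $p\in(\mathcal{V}^h_0)^d$, $\mathrm{div}_h p\in\mathcal{V}^h_1$ is defined by $(\mathrm{div}_h p,g)_\Omega=-(p,\nabla g)_\Omega$ for all $g\in\mathcal{V}^h_1$. $\|\nabla\|=\sup_{0\ne v\in\mathcal{V}^h_1}\|\nabla v\|_\Omega/\|v\|_\Omega$. $F_{ad}=\{f\in BV(\Omega):\underline f\le f\le\overline f\text{ a.e.}\}$ for given constants, $F^h_{ad}=F_{ad}\cap\mathcal{V}^h_1$; $\mathcal{B}_1=\{p=(p_j)\in(\mathcal{V}^h_0)^d:\max_j\|p_j\|_{L^\infty}\le1\}$ and $I_{\mathcal{B}_1}$ its indicator function. *)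

(* Defs.v *)
From HB Require Import structures.
From mathcomp Require Import all_boot all_order all_algebra.
From mathcomp Require Import boolp classical_sets reals constructive_ereal.
Set Implicit Arguments. Unset Strict Implicit. Unset Printing Implicit Defensive.
Import Order.TTheory GRing.Theory Num.Theory.
Local Open Scope ring_scope.
Local Open Scope classical_set_scope.

(* Finite element model:
   - V1 = V_1^h is represented by nodal coefficient vectors 'rV[R]_n
     (n = number of nodes of the triangulation);
   - (V_0^h)^d is represented by 'M[R]_(ne, d): p T j = value of the
     j-th component p_j on element T (ne = number of elements);
   - vol T > 0 is the volume of element T;
   - Dphi i T j = j-th partial derivative of the i-th nodal basis function
     on element T (a constant);
   - L^2 type bilinear forms on V1 are given by their (Gram) matrices. *)

Section FE.
Context {R : realType} {n ne d : nat}.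

Definition bil (M : 'M[R]_n) (u v : 'rV[R]_n) : R := (u *m M *m v^T) 0 0.

Definition lfun (w u : 'rV[R]_n) : R := (u *m w^T) 0 0.

Definition ipP (vol : 'I_ne -> R) (p q : 'M[R]_(ne, d)) : R :=
  \sum_(T < ne) vol T * \sum_(j < d) p T j * q T j.

Definition gradh (Dphi : 'I_n -> 'I_ne -> 'I_d -> R) (f : 'rV[R]_n)
  : 'M[R]_(ne, d) := \matrix_(T < ne, j < d) \sum_(i < n) f 0 i * Dphi i T j.

Definition H1sq (MO : 'M[R]_n) (vol : 'I_ne -> R) Dphi (u : 'rV[R]_n) : R :=
  bil MO u u + ipP vol (gradh Dphi u) (gradh Dphi u).

Definition gradnorm (MO : 'M[R]_n) (vol : 'I_ne -> R) Dphi : R :=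
  sup [set Num.sqrt (ipP vol (gradh Dphi v) (gradh Dphi v))
             / Num.sqrt (bil MO v v) | v in [set v : 'rV[R]_n | v != 0]].

Definition Fadh (flo fhi : R) : set 'rV[R]_n :=
  [set f | forall i, flo <= f 0 i <= fhi].

Definition B1 : set 'M[R]_(ne, d) :=
  [set p | forall T j, `|p T j| <= 1].

Definition IB1 (p : 'M[R]_(ne, d)) : \bar R :=
  if `[< B1 p >] then 0%E else +oo%E.

Definition ipX (MO : 'M[R]_n) (vol : 'I_ne -> R)
  (mu nu : 'rV[R]_n * 'M[R]_(ne, d)) : R :=
  bil MO mu.1 nu.1 + ipP vol mu.2 nu.2.

Definition Bop (tau theta rho : R) (uba : 'rV[R]_n -> 'rV[R]_n)
  (divh : 'M[R]_(ne, d) -> 'rV[R]_n) Dphi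
  (mu : 'rV[R]_n * 'M[R]_(ne, d)) : 'rV[R]_n * 'M[R]_(ne, d) :=
  (tau^-1 *: mu.1 - uba mu.1 + rho *: divh mu.2,
   - (rho *: gradh Dphi mu.1) + (theta / tau) *: mu.2).

Definition Aop (rho : R) (uha : 'rV[R]_n -> 'rV[R]_n)
  (divh : 'M[R]_(ne, d) -> 'rV[R]_n) Dphi
  (mu : 'rV[R]_n * 'M[R]_(ne, d)) : 'rV[R]_n * 'M[R]_(ne, d) :=
  (uha mu.1 - rho *: divh mu.2, - (rho *: gradh Dphi mu.1)).

Definition Jf (MO : 'M[R]_n) vol Dphi (uha : 'rV[R]_n -> 'rV[R]_n)
  (rho tau : R) (fn : 'rV[R]_n) (pn : 'M[R]_(ne, d)) (f : 'rV[R]_n) : R :=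
  bil MO f (uha fn) + rho * ipP vol (gradh Dphi f) pn
  + (2 * tau)^-1 * bil MO (f - fn) (f - fn).

Definition Jp vol Dphi (rho tau theta : R) (ftil : 'rV[R]_n)
  (pn p : 'M[R]_(ne, d)) : \bar R :=
  ((rho * ipP vol (gradh Dphi ftil) p
    - theta / (2 * tau) * ipP vol (p - pn) (p - pn))%:E - IB1 p)%E.

End FE.

(* Main.v *)
Require Import Defs.
From HB Require Import structures.
From mathcomp Require Import all_boot all_order all_algebra.
From mathcomp Require Import boolp classical_sets reals constructive_ereal.
From mathcomp Require Import ring lra.
Set Implicit Arguments. Unset Strict Implicit.
Import Order.TTheory GRing.Theory Num.Theory.
Local Open Scope ring_scope.
Local Open Scope classical_set_scope.

Section Aux.
Variables (R : realType) (n ne d : nat).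
Implicit Types (Dphi : 'I_n -> 'I_ne -> 'I_d -> R) (M : 'M[R]_n) (x y z : 'rV[R]_n) (p q r : 'M[R]_(ne, d)).

Lemma bilDl M x y z : bil M (x + y) z = bil M x z + bil M y z.
Proof. by rewrite /bil !mulmxDl mxE. Qed.
Lemma bilZl M a x z : bil M (a *: x) z = a * bil M x z.
Proof. by rewrite /bil -!scalemxAl mxE. Qed.
Lemma bilDr M x y z : bil M z (x + y) = bil M z x + bil M z y.
Proof. by rewrite /bil linearD /= mulmxDr mxE. Qed.
Lemma bilZr M a x z : bil M z (a *: x) = a * bil M z x.
Proof. by rewrite /bil linearZ /= -scalemxAr mxE. Qed.
Lemma bilNl M x z : bil M (- x) z = - bil M x z.
Proof. by rewrite -scaleN1r bilZl mulN1r. Qed.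
Lemma bilNr M x z : bil M z (- x) = - bil M z x.
Proof. by rewrite -scaleN1r bilZr mulN1r. Qed.
Lemma bilBl M x y z : bil M (x - y) z = bil M x z - bil M y z.
Proof. by rewrite bilDl bilNl. Qed.
Lemma bilBr M x y z : bil M z (x - y) = bil M z x - bil M z y.
Proof. by rewrite bilDr bilNr. Qed.
Lemma bil_sym M x y : M^T = M -> bil M x y = bil M y x.
Proof.
move=> hM; rewrite /bil.
have h : forall A : 'M[R]_1, A 0 0 = A^T 0 0 by move=> A; rewrite mxE.
by rewrite h !trmx_mul trmxK hM mulmxA.
Qed.

Lemma ipPDl vol p q r : ipP vol (p + q) r = ipP vol p r + ipP vol q r.
Proof.
rewrite /ipP -big_split; apply: eq_bigr => T _ /=; rewrite -mulrDr -big_split.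
by congr (_ * _); apply: eq_bigr => j _; rewrite mxE mulrDl.
Qed.
Lemma ipPZl vol a p r : ipP vol (a *: p) r = a * ipP vol p r.
Proof.
rewrite /ipP mulr_sumr; apply: eq_bigr => T _; rewrite [RHS]mulrCA [in RHS]mulr_sumr.
by congr (_ * _); apply: eq_bigr => j _; rewrite mxE mulrA.
Qed.
Lemma ipP_sym vol p q : ipP vol p q = ipP vol q p.
Proof.
by rewrite /ipP; apply: eq_bigr => T _; congr (_ * _); apply: eq_bigr => j _; rewrite mulrC.
Qed.
Lemma ipPDr vol p q r : ipP vol r (p + q) = ipP vol r p + ipP vol r q.
Proof. by rewrite ipP_sym ipPDl !(ipP_sym _ r). Qed.
Lemma ipPZr vol a p r : ipP vol r (a *: p) = a * ipP vol r p.
Proof. by rewrite ipP_sym ipPZl ipP_sym. Qed.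
Lemma ipPNl vol p r : ipP vol (- p) r = - ipP vol p r.
Proof. by rewrite -scaleN1r ipPZl mulN1r. Qed.
Lemma ipPNr vol p r : ipP vol r (- p) = - ipP vol r p.
Proof. by rewrite -scaleN1r ipPZr mulN1r. Qed.
Lemma ipPBl vol p q r : ipP vol (p - q) r = ipP vol p r - ipP vol q r.
Proof. by rewrite ipPDl ipPNl. Qed.
Lemma ipPBr vol p q r : ipP vol r (p - q) = ipP vol r p - ipP vol r q.
Proof. by rewrite ipPDr ipPNr. Qed.
Lemma ipP_ge0 vol p : (forall T, 0 < vol T) -> 0 <= ipP vol p p.
Proof.
move=> hv; apply: sumr_ge0 => T _; apply: mulr_ge0; first exact: ltW.
by apply: sumr_ge0 => j _; rewrite -expr2 sqr_ge0.
Qed.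
Lemma ipP_gt0 vol p : (forall T, 0 < vol T) -> p != 0 -> 0 < ipP vol p p.
Proof.
move=> hv hp; rewrite lt_def ipP_ge0 // andbT; apply/eqP => h0.
move/negP: hp; apply; apply/eqP/matrixP => T j; rewrite mxE.
have hge : forall T0 : 'I_ne, true -> 0 <= vol T0 * \sum_(k < d) p T0 k * p T0 k.
  move=> T0 _; apply: mulr_ge0; first exact: ltW.
  by apply: sumr_ge0 => k _; rewrite -expr2 sqr_ge0.
have h1 := psumr_eq0P hge h0 (i:=T) isT.
have h2 : \sum_(k < d) p T k * p T k = 0.
  by move: h1 => /eqP; rewrite mulf_eq0 gt_eqF //= => /eqP.
have hge2 : forall k : 'I_d, true -> 0 <= p T k * p T k.
  by move=> k _; rewrite -expr2 sqr_ge0.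
have := psumr_eq0P hge2 h2 (i:=j) isT.
by move=> /eqP; rewrite mulf_eq0 orbb => /eqP.
Qed.

Lemma gradhD Dphi x y : gradh Dphi (x + y) = gradh Dphi x + gradh Dphi y :> 'M[R]_(ne,d).
Proof.
apply/matrixP => T j; rewrite !mxE -big_split; apply: eq_bigr => i _.
by rewrite mxE mulrDl.
Qed.
Lemma gradhZ Dphi a x : gradh Dphi (a *: x) = a *: gradh Dphi x :> 'M[R]_(ne,d).
Proof.
apply/matrixP => T j; rewrite !mxE mulr_sumr; apply: eq_bigr => i _.
by rewrite mxE mulrA.
Qed.
Lemma gradhN Dphi x : gradh Dphi (- x) = - gradh Dphi x :> 'M[R]_(ne,d).
Proof. by rewrite -scaleN1r gradhZ scaleN1r. Qed.
Lemma gradhB Dphi x y : gradh Dphi (x - y) = gradh Dphi x - gradh Dphi y :> 'M[R]_(ne,d).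
Proof. by rewrite gradhD gradhN. Qed.
Lemma gradh0 Dphi : gradh Dphi 0 = 0 :> 'M[R]_(ne,d).
Proof. by rewrite -(scale0r 0) gradhZ scale0r. Qed.

End Aux.

Section Gen.
Variables (R : realType) (V : lmodType R) (B : V -> V -> R).
Hypotheses (hsym : forall x y, B x y = B y x)
  (hDl : forall x y z, B (x + y) z = B x z + B y z)
  (hZl : forall a x z, B (a *: x) z = a * B x z).

Lemma gexpand s t x y :
  B (s *: x + t *: y) (s *: x + t *: y)
  = s ^+ 2 * B x x + 2 * s * t * B x y + t ^+ 2 * B y y.
Proof.
have hDr : forall u v w, B u (v + w) = B u v + B u w.
  by move=> u v w; rewrite hsym hDl !(hsym _ u).
have hZr : forall a u v, B u (a *: v) = a * B u v.
  by move=> a u v; rewrite hsym hZl hsym.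
rewrite !hDl !hDr !hZl !hZr (hsym y x).
ring.
Qed.

Hypothesis hpos : forall x, 0 <= B x x.

Lemma gCS x y : B x y ^+ 2 <= B x x * B y y.
Proof.
have ha := hpos x; have hb := hpos y.
have [hb0|hb0] := eqVneq (B y y) 0.
  have [hc|hc] := eqVneq (B x y) 0; first by rewrite hc hb0; lra.
  have := hpos (1 *: x + (- (B x x + 1) / (2 * B x y)) *: y).
  rewrite gexpand hb0.
  have -> : 2 * 1 * (- (B x x + 1) / (2 * B x y)) * B x y = - (B x x + 1).
    by field.
  lra.
have hbp : 0 < B y y by rewrite lt_def hb0 hb.
have := hpos (B y y *: x + (- B x y) *: y); rewrite gexpand => h.
have h2 : 0 <= B y y * (B x x * B y y - B x y ^+ 2) by rewrite -[X in _ <= X]/(_); nra.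
rewrite -subr_ge0; move: h2; rewrite pmulr_rge0 //.
Qed.

Lemma gCSs x y : B x y <= Num.sqrt (B x x) * Num.sqrt (B y y).
Proof.
rewrite -sqrtrM ?hpos //; apply: le_trans (ler_norm _) _.
rewrite -sqrtr_sqr ler_sqrt ?mulr_ge0 ?hpos //; exact: gCS.
Qed.
End Gen.

Section Num.
Variable R : realType.

Lemma vi_lemma (a b : R) : 0 <= b ->
  (forall t, 0 < t -> t <= 1 -> 0 <= t * a + t ^+ 2 * b) -> 0 <= a.
Proof.
move=> hb h; rewrite leNgt; apply/negP => ha.
have hd : 0 < 2 * b - a by lra.
have := h (- a / (2 * b - a)).
have ht : 0 < - a / (2 * b - a) by apply: divr_gt0; lra.
have ht1 : - a / (2 * b - a) <= 1 by rewrite ler_pdivrMr //; lra.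
move=> /(_ ht ht1).
set t := - a / (2 * b - a).
have htd : t * (2 * b - a) = - a by rewrite /t mulfVK // gt_eqF.
have : t * a + t ^+ 2 * b = t * (a + t * b) by ring.
move=> ->; rewrite pmulr_rge0 //.
nra.
Qed.

Lemma quad_pos (a b k X Y : R) : 0 <= X -> 0 <= Y -> (0 < X \/ 0 < Y) -> 0 < b ->
  k ^+ 2 < a * b -> 0 < a * X ^+ 2 - 2 * k * X * Y + b * Y ^+ 2.
Proof.
move=> hX hY hXY hb hk.
have ha : 0 < a.
  have : 0 < a * b by apply: le_lt_trans hk; rewrite sqr_ge0.
  by rewrite pmulr_lgt0.
rewrite -(pmulr_rgt0 _ ha).
have -> : a * (a * X ^+ 2 - 2 * k * X * Y + b * Y ^+ 2)
  = (a * X - k * Y) ^+ 2 + (a * b - k ^+ 2) * Y ^+ 2 by ring.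
case: hXY => h.
  have [hY0|hY0] := eqVneq Y 0.
    rewrite hY0; have : 0 < a * X by rewrite mulr_gt0.
    move=> haX; nra.
  have hYp : 0 < Y by rewrite lt_def hY0 hY.
  have h1 : 0 < (a * b - k ^+ 2) * Y ^+ 2 by rewrite mulr_gt0 ?subr_gt0 ?exprn_gt0.
  have := sqr_ge0 (a * X - k * Y); lra.
have h1 : 0 < (a * b - k ^+ 2) * Y ^+ 2 by rewrite mulr_gt0 ?subr_gt0 ?exprn_gt0.
have := sqr_ge0 (a * X - k * Y); lra.
Qed.
End Num.
Unset Implicit Arguments.

Lemma ipP00 (R : realType) (ne d : nat) (vol : 'I_ne -> R) :
  ipP vol (0 : 'M[R]_(ne, d)) 0 = 0.
Proof.
rewrite /ipP big1 // => T _; rewrite big1 ?mulr0 // => j _; by rewrite mxE mul0r.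
Qed.
Theorem lemma4p8 (R : realType) (n ne d : nat) (hd : (2 <= d)%N)
  (* geometry of the discrete spaces *)
  (vol : 'I_ne -> R) (hvol : forall T, 0 < vol T)
  (Dphi : 'I_n -> 'I_ne -> 'I_d -> R)
  (* Gram matrices: (.,.)_Omega, a(.,.), (.,.)_{dOmega}, (.,.)_Gamma on V1 *)
  (MO Ka MB MG : 'M[R]_n)
  (hMOsym : MO^T = MO) (hMOpos : forall u : 'rV[R]_n, u != 0 -> 0 < bil MO u u)
  (hKsym : Ka^T = Ka) (hMBsym : MB^T = MB) (hMGsym : MG^T = MG)
  (hMG0 : forall u, 0 <= bil MG u u)
  (hMGB : forall u, bil MG u u <= bil MB u u)
  (c1 cg : R) (hc1 : 0 < c1) (hcg : 0 < cg)
  (hcoer : forall u, c1 * H1sq MO vol Dphi u <= bil Ka u u)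
  (htrace : forall u, Num.sqrt (bil MB u u) <= cg * Num.sqrt (H1sq MO vol Dphi u))
  (* data: j (as functional on V1), z (via v |-> (z, v)_Gamma), bounds *)
  (jv zv : 'rV[R]_n) (flo fhi : R)
  (* discrete state / adjoint solution operators *)
  (uh uha ub uba : 'rV[R]_n -> 'rV[R]_n)
  (huh : forall f v, bil Ka (uh f) v = bil MO f v + lfun jv v)
  (huha : forall f v, bil Ka (uha f) v = bil MG (uh f) v - lfun zv v)
  (hub : forall f v, bil Ka (ub f) v = bil MO f v)
  (huba : forall f v, bil Ka (uba f) v = bil MG (ub f) v)
  (* discrete divergence *)
  (divh : 'M[R]_(ne, d) -> 'rV[R]_n)
  (hdiv : forall p g, bil MO (divh p) g = - ipP vol p (gradh Dphi g))
  (h rho tau theta : R) (hh : 0 < h < 1) (hrho : 0 < rho)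
  (htau : 0 < tau) (htheta : 0 < theta)
  (hcond : rho ^+ 2 * gradnorm MO vol Dphi ^+ 2
           < (tau^-1 - cg ^+ 2 / c1 ^+ 2) * (theta / tau)) :
  ((forall mu nu, ipX MO vol (Bop tau theta rho uba divh Dphi mu) nu
                  = ipX MO vol mu (Bop tau theta rho uba divh Dphi nu))
   /\ (forall mu, mu != (0, 0) -> 0 < ipX MO vol (Bop tau theta rho uba divh Dphi mu) mu))
  /\
  (forall (fn f1 : 'rV[R]_n) (pn p1 : 'M[R]_(ne, d)),
     Fadh flo fhi fn ->
     Fadh flo fhi f1 ->
     (forall f, Fadh flo fhi f ->
        Jf MO vol Dphi uha rho tau fn pn f1 <= Jf MO vol Dphi uha rho tau fn pn f) ->
     (forall p, (Jp vol Dphi rho tau theta (2 *: f1 - fn) pn p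
                 <= Jp vol Dphi rho tau theta (2 *: f1 - fn) pn p1)%E) ->
     forall nu, Fadh flo fhi nu.1 -> B1 nu.2 ->
       0 <= ipX MO vol
              (Aop rho uha divh Dphi (f1, p1)
               + Bop tau theta rho uba divh Dphi (f1 - fn, p1 - pn))
              (nu - (f1, p1))).
Proof.
have MOs : forall x y, bil MO x y = bil MO y x := fun x y => bil_sym x y hMOsym.
have Kas : forall x y, bil Ka x y = bil Ka y x := fun x y => bil_sym x y hKsym.
have MGs : forall x y, bil MG x y = bil MG y x := fun x y => bil_sym x y hMGsym.
have bil00 : forall M : 'M[R]_n, bil M 0 0 = 0.
  by move=> M; rewrite /bil !mul0mx mxE.
have hMOge0 : forall u, 0 <= bil MO u u.
  by move=> u; have [->|hu] := eqVneq u 0; [rewrite bil00 | exact: ltW (hMOpos _ hu)].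
have CSO := gCSs MOs (bilDl MO) (bilZl MO) hMOge0.
have CSO2 := gCS MOs (bilDl MO) (bilZl MO) hMOge0.
have hPge0 : forall p : 'M[R]_(ne, d), 0 <= ipP vol p p := fun p => ipP_ge0 p hvol.
have CSP := gCSs (ipP_sym vol) (ipPDl vol) (ipPZl vol) hPge0.
have e1 : forall f g, bil MO (uba f) g = bil MG (ub f) (ub g).
  by move=> f g; rewrite MOs -hub Kas huba.
have hUBA : forall f g, bil MO (uba f) g = bil MO f (uba g).
  by move=> f g; rewrite e1 [RHS]MOs e1 MGs.
have hUHA : forall f w, bil MO (uha f) w
    = bil MO f (uba w) + lfun jv (uba w) - lfun zv (ub w).
  by move=> f w; rewrite MOs -hub Kas huha MGs -huba Kas huh.
have unitMO : MO \in unitmx.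
  rewrite -row_free_unit; apply: inj_row_free => v hv; apply/eqP; apply: contraT => hne.
  by have := hMOpos _ hne; rewrite /bil hv mul0mx mxE ltxx.
have lin : forall c : 'cV[R]_n, exists w, forall v, (v *m c) 0 0 = bil MO v w.
  move=> c; exists (invmx MO *m c)^T => v.
  by rewrite /bil trmxK !mulmxA -(mulmxA v) mulmxV // mulmx1.
have gradE : forall v T j, gradh Dphi v T j = (v *m (\col_i Dphi i T j)) 0 0.
  by move=> v T j; rewrite !mxE; apply: eq_bigr => i _; rewrite mxE.
pose wf T j := proj1_sig (cid (lin (\col_i Dphi i T j))).
have [C [hC0 hC]] : exists C, 0 <= C /\ forall v,
    ipP vol (gradh Dphi v) (gradh Dphi v) <= C * bil MO v v.
  exists (\sum_T vol T * \sum_j bil MO (wf T j) (wf T j)); split.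
    apply: sumr_ge0 => T _; apply: mulr_ge0; first exact: ltW.
    by apply: sumr_ge0.
  move=> v; rewrite /ipP mulr_suml; apply: ler_sum => T _; rewrite -mulrA.
  apply: ler_wpM2l; first exact: ltW.
  rewrite mulr_suml; apply: ler_sum => j _.
  by rewrite gradE (proj2_sig (cid (lin _))) -expr2 mulrC; apply: CSO2.
set G := gradnorm MO vol Dphi.
have hG : forall v, Num.sqrt (ipP vol (gradh Dphi v) (gradh Dphi v))
    <= G * Num.sqrt (bil MO v v).
  move=> v; have [->|hv] := eqVneq v 0.
    by rewrite gradh0 bil00 ipP00 sqrtr0 mulr0.
  have hq : 0 < bil MO v v := hMOpos v hv.
  rewrite -ler_pdivrMr ?sqrtr_gt0 //; apply: ub_le_sup; last by exists v.
  exists (Num.sqrt C) => x [u hu <-].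
  have hqu : 0 < bil MO u u := hMOpos u hu.
  rewrite ler_pdivrMr ?sqrtr_gt0 // -sqrtrM // ler_sqrt ?mulr_ge0 //; exact: hC.
have hMGb : forall f, bil MG (ub f) (ub f) <= cg ^+ 2 / c1 ^+ 2 * bil MO f f.
  move=> f; set u := ub f.
  have hH1 : bil MO u u <= H1sq MO vol Dphi u by rewrite /H1sq lerDl.
  have hH0 : 0 <= H1sq MO vol Dphi u by apply: le_trans hH1.
  have k1 : c1 * H1sq MO vol Dphi u <= bil MO f u by rewrite -hub; exact: hcoer.
  have k2 : bil MO f u <= Num.sqrt (bil MO f f) * Num.sqrt (H1sq MO vol Dphi u).
    apply: le_trans (CSO f u) _; apply: ler_wpM2l; first exact: sqrtr_ge0.
    by rewrite ler_sqrt.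
  have ht := htrace u.
  have hMB0 : 0 <= bil MB u u by apply: le_trans (hMGB u).
  have hs := sqr_sqrtr hH0; have hF := sqr_sqrtr (hMOge0 f).
  have hB := sqr_sqrtr hMB0.
  set s := Num.sqrt (H1sq MO vol Dphi u) in k2 ht hs.
  set F := Num.sqrt (bil MO f f) in k2 hF.
  set b := Num.sqrt (bil MB u u) in ht hB.
  have s0 : 0 <= s := sqrtr_ge0 _.
  have F0 : 0 <= F := sqrtr_ge0 _.
  have b0 : 0 <= b := sqrtr_ge0 _.
  have k3 : c1 * s <= F.
    have [s00|sp] := eqVneq s 0; first by rewrite s00 mulr0.
    have sp' : 0 < s by rewrite lt_def sp s0.
    rewrite -(ler_pM2r sp'); rewrite -hs in k1; nra.
  have k4 : c1 ^+ 2 * s ^+ 2 <= bil MO f f.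
    by rewrite -hF -exprMn; apply: lerXn2r; rewrite ?nnegrE ?mulr_ge0 ?(ltW hc1).
  have k5 : bil MB u u <= cg ^+ 2 * s ^+ 2.
    by rewrite -hB -exprMn; apply: lerXn2r; rewrite ?nnegrE ?mulr_ge0 ?(ltW hcg).
  have -> : cg ^+ 2 / c1 ^+ 2 * bil MO f f
      = cg ^+ 2 * s ^+ 2 + cg ^+ 2 / c1 ^+ 2 * (bil MO f f - c1 ^+ 2 * s ^+ 2).
    by field; rewrite gt_eqF.
  have : 0 <= cg ^+ 2 / c1 ^+ 2 * (bil MO f f - c1 ^+ 2 * s ^+ 2).
    by rewrite mulr_ge0 ?divr_ge0 ?sqr_ge0 ?subr_ge0.
  have := hMGB u; lra.
split.
  split.
    move=> [f p] [g q]; rewrite /ipX /Bop /=.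
    rewrite !(bilDl, bilNl, bilZl, bilDr, bilNr, bilZr, ipPDl, ipPNl, ipPZl, ipPDr, ipPNr, ipPZr).
    rewrite hUBA hdiv (MOs f (divh q)) hdiv (ipP_sym vol (gradh Dphi f) q).
    ring.
  move=> [f p] hne; rewrite /ipX /Bop /=.
  rewrite !(bilDl, bilNl, bilZl, bilDr, bilNr, bilZr, ipPDl, ipPNl, ipPZl, ipPDr, ipPNr, ipPZr).
  rewrite e1 hdiv (ipP_sym vol p).
  have hXY : 0 < Num.sqrt (bil MO f f) \/ 0 < Num.sqrt (ipP vol p p).
    move: hne; rewrite xpair_eqE negb_and => /orP [hf|hp].
      by left; rewrite sqrtr_gt0; exact: hMOpos.
    by right; rewrite sqrtr_gt0; exact: ipP_gt0.
  have hI : ipP vol (gradh Dphi f) p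
      <= G * Num.sqrt (bil MO f f) * Num.sqrt (ipP vol p p).
    apply: le_trans (CSP _ _) _; apply: ler_wpM2r; first exact: sqrtr_ge0.
    exact: hG.
  have hM := hMGb f.
  have hX := sqr_sqrtr (hMOge0 f); have hY := sqr_sqrtr (hPge0 p).
  set X := Num.sqrt (bil MO f f) in hXY hI hX.
  set Y := Num.sqrt (ipP vol p p) in hXY hI hY.
  rewrite -hX -hY in hM *.
  have hQ := quad_pos (sqrtr_ge0 (bil MO f f) : 0 <= X) (sqrtr_ge0 (ipP vol p p) : 0 <= Y) hXY
    (divr_gt0 htheta htau) (k := rho * G) (a := tau^-1 - cg ^+ 2 / c1 ^+ 2).
  rewrite exprMn in hQ; have {hQ} := hQ hcond.
  have : 0 <= rho * (G * X * Y - ipP vol (gradh Dphi f) p).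
    by rewrite mulr_ge0 ?subr_ge0 // ltW.
  lra.
move=> fn f1 pn p1 hfn hf1 hminf hmaxp [g q] /= hg hq.
have hB0 : B1 (0 : 'M[R]_(ne, d)) by move=> T j; rewrite mxE normr0.
have Jp_fin : forall ft p, B1 p -> Jp vol Dphi rho tau theta ft pn p
    = (rho * ipP vol (gradh Dphi ft) p
       - theta / (2 * tau) * ipP vol (p - pn) (p - pn))%:E.
  by move=> ft p hp; rewrite /Jp /IB1 asboolT // sube0.
have hp1 : B1 p1.
  apply: contrapT => hn; have := hmaxp 0; rewrite Jp_fin // /Jp /IB1 asboolF //.
have VIp : 0 <= 2 * (theta / (2 * tau)) * ipP vol (p1 - pn) (q - p1)
    - rho * ipP vol (gradh Dphi (2 *: f1 - fn)) (q - p1).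
  apply: (vi_lemma (b := theta / (2 * tau) * ipP vol (q - p1) (q - p1))).
    by rewrite mulr_ge0 ?divr_ge0 ?mulr_ge0 // ltW.
  move=> t t0 t1.
  have hpt : B1 (p1 + t *: (q - p1)).
    move=> T j; rewrite !mxE; have := hp1 T j; have := hq T j.
    rewrite !ler_norml => /andP[h1 h2] /andP[h3 h4].
    apply/andP; split; nra.
  have := hmaxp (p1 + t *: (q - p1)); rewrite !Jp_fin // lee_fin (addrAC p1).
  move: (q - p1) (p1 - pn) => r u.
  rewrite !(ipPDl, ipPDr, ipPZl, ipPZr) (ipP_sym vol r u).
  lra.
have VIf : 0 <= bil MO (g - f1) (uha fn) + rho * ipP vol (gradh Dphi (g - f1)) pn
    + 2 * (2 * tau)^-1 * bil MO (f1 - fn) (g - f1).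
  apply: (vi_lemma (b := (2 * tau)^-1 * bil MO (g - f1) (g - f1))).
    by rewrite mulr_ge0 ?invr_ge0 ?mulr_ge0 // ltW.
  move=> t t0 t1.
  have hft : Fadh flo fhi (f1 + t *: (g - f1)).
    move=> i; rewrite !mxE; have := hf1 i; have := hg i.
    move=> /andP[h1 h2] /andP[h3 h4].
    apply/andP; split; nra.
  have := hminf _ hft; rewrite /Jf (addrAC f1) gradhD gradhZ.
  move: (g - f1) (f1 - fn) => w u.
  rewrite !(bilDl, bilDr, bilZl, bilZr, ipPDl, ipPZl) (MOs w u).
  lra.
rewrite (MOs _ (uha fn)) hUHA (ipP_sym vol (gradh Dphi (g - f1)) pn) in VIf.
move: VIf VIp; rewrite /ipX /Aop /Bop /=.
move: (g - f1) (q - p1) => w r.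
rewrite !(gradhD, gradhN, gradhZ).
rewrite !(bilDl, bilNl, bilZl, bilDr, bilNr, bilZr, ipPDl, ipPNl, ipPZl, ipPDr, ipPNr, ipPZr).
rewrite hUHA hUBA !hdiv.
rewrite !(bilDl, bilNl, bilZl, bilDr, bilNr, bilZr, ipPDl, ipPNl, ipPZl, ipPDr, ipPNr, ipPZr).
have e2 : theta / tau = 2 * (theta / (2 * tau)) by field; rewrite gt_eqF.
have e3 : tau^-1 = 2 / (2 * tau) by field; rewrite gt_eqF.
rewrite e2 e3.
lra.
Qed.
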